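(* Let $m,n$ be integers with $m\ge 3$ and $n\ge 2$. Then the set $E(m,n)=\{k \mid \text{there exists a primitive nonnegative tensor } \mathbb{A} \text{ of order } m \text{ and dimension } n \text{ with } \gamma(\mathbb{A})=k\}$ equals $\{1,2,\ldots,(n-1)^2+1\}$.
   Context: A tensor $\mathbb{A}=(a_{i_1i_2\ldots i_m})$ of order $m$ and dimension $n$ is an array with entries indexed by $i_1,\ldots,i_m\in[n]=\{1,\ldots,n\}$; it is nonnegative if all entries are real and $\ge 0$. For $x\in\mathbb{R}^n$, $\mathbb{A}x\in\mathbb{R}^n$ is the vector with $(\mathbb{A}x)_i=\sum_{i_2,\ldots,i_m=1}^n a_{ii_2\ldots i_m}x_{i_2}\cdots x_{i_m}$, and $x^{[r]}=(x_1^r,\ldots,x_n^r)^T$. Define $T_{\mathbb{A}}(x)=(\mathbb{A}x)^{[1/(m-1)]}$. A nonnegative tensor $\mathbb{A}$ is primitive if there is a positive integer $r$ such that $T_{\mathbb{A}}^r(x)>0$ (entrywise) for every nonnegative nonzero $x\in\mathbb{R}^n$; the smallest such $r$ is the primitive degree $\gamma(\mathbb{A})$. *)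

(* Defs.v *)
From mathcomp Require Import all_boot all_order all_algebra.
From mathcomp Require Import reals exp.
Set Implicit Arguments. Unset Strict Implicit. Unset Printing Implicit Defensive.
Import Order.TTheory GRing.Theory Num.Theory.
Local Open Scope ring_scope.

(* A tensor of order m and dimension n: entries indexed by (i_1,...,i_m),
   encoded as a function f : 'I_m -> 'I_n (f k = i_{k+1}). *)
Definition tensor (R : realType) (m n : nat) := {ffun {ffun 'I_m -> 'I_n} -> R}.

Definition nonneg_tensor (R : realType) m n (A : tensor R m n) : Prop :=
  forall f, 0 <= A f.

Definition tapp (R : realType) m n (A : tensor R m n) (x : 'I_n -> R) : 'I_n -> R :=
  fun i => \sum_(f : {ffun 'I_m -> 'I_n} |
                 [forall k : 'I_m, (val k == 0%N) ==> (f k == i)])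
             A f * \prod_(k : 'I_m | val k != 0%N) x (f k).

Definition TA (R : realType) m n (A : tensor R m n) (x : 'I_n -> R) : 'I_n -> R :=
  fun i => powR (tapp A x i) ((m.-1)%:R)^-1.

Definition nonneg_nonzero_vec (R : realType) n (x : 'I_n -> R) : Prop :=
  (forall i, 0 <= x i) /\ (exists i, x i != 0).

Definition prim_exponent (R : realType) m n (A : tensor R m n) (r : nat) : Prop :=
  (0 < r)%N /\
  forall x : 'I_n -> R, nonneg_nonzero_vec x -> forall i, 0 < iter r (TA A) x i.

Definition primitive (R : realType) m n (A : tensor R m n) : Prop :=
  nonneg_tensor A /\ exists r, prim_exponent A r.

Definition primitive_degree (R : realType) m n (A : tensor R m n) (k : nat) : Prop :=
  prim_exponent A k /\ forall r, (r < k)%N -> ~ prim_exponent A r.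

(* Main.v *)
Require Import Defs.
From mathcomp Require Import all_boot all_order all_algebra.
From mathcomp Require Import reals exp.
From mathcomp Require Import zify.
Set Implicit Arguments. Unset Strict Implicit. Unset Printing Implicit Defensive.
Import Order.TTheory GRing.Theory Num.Theory.

Definition primb n (F : {set 'I_n} -> {set 'I_n}) (r : nat) : Prop :=
  (0 < r)%N /\ forall S : {set 'I_n}, S != set0 -> iter r F S = setT.

Definition monoF n (F : {set 'I_n} -> {set 'I_n}) :=
  forall S T : {set 'I_n}, S \subset T -> F S \subset F T.

Lemma iter_mono n (F : {set 'I_n} -> {set 'I_n}) t (S T : {set 'I_n}) :
  monoF F -> S \subset T -> iter t F S \subset iter t F T.
Proof. by move=> HF; elim: t => //= t IH /IH; apply: HF. Qed.

Lemma setT_ne0 n : (0 < n)%N -> [set: 'I_n] != set0.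
Proof. by move=> Hn; apply/set0Pn; exists (Ordinal Hn). Qed.

Lemma FsetT n (F : {set 'I_n} -> {set 'I_n}) t S :
  monoF F -> (0 < t)%N -> iter t F S = setT -> F setT = setT.
Proof.
move=> HF; case: t => // t _ /= H; apply/eqP; rewrite eqEsubset subsetT /=.
by rewrite -{1}H; apply: HF; apply: subsetT.
Qed.

Lemma iterT n (F : {set 'I_n} -> {set 'I_n}) t :
  F setT = setT -> iter t F setT = setT.
Proof. by move=> H; elim: t => //= t ->. Qed.

Lemma iter_late n (F : {set 'I_n} -> {set 'I_n}) r t S :
  F setT = setT -> iter r F S = setT -> (r <= t)%N -> iter t F S = setT.
Proof.
move=> HT H Hrt; rewrite -(subnK Hrt) iterD H; exact: iterT.
Qed.

Lemma iter_set0 n (F : {set 'I_n} -> {set 'I_n}) t :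
  F set0 = set0 -> iter t F set0 = set0.
Proof. by move=> H; elim: t => //= t ->. Qed.

Lemma set1_neq0 (T : finType) (x : T) : [set x] != set0.
Proof. by apply/set0Pn; exists x; rewrite inE. Qed.

Lemma exists_noninj n (F : {set 'I_n} -> {set 'I_n}) r :
  (2 <= n)%N -> monoF F -> F set0 = set0 -> primb F r ->
  exists g : 'I_n -> 'I_n, (forall u, g u \in F [set u]) /\ ~~ injectiveb g.
Proof.
move=> Hn HF H0 [Hr Hp].
have HT : F setT = setT.
  by apply: (FsetT (t := r)) => //; apply: Hp; apply: setT_ne0; lia.
have Hne : forall u, F [set u] != set0.
  move=> u; apply/negP => /eqP Hu.
  have := Hp [set u] (set1_neq0 u).
  case: r Hr {Hp} => // r _.
  rewrite iterSr Hu iter_set0 // => /esym /eqP; apply/negP; apply: setT_ne0; lia.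
pose g0 u := odflt u [pick v in F [set u]].
have Hg0 : forall u, g0 u \in F [set u].
  move=> u; rewrite /g0; case: pickP => [v //|/= Hnone].
  by case/set0Pn: (Hne u) => v; rewrite (Hnone v).
case Hinj: (injectiveb g0); last by exists g0; rewrite Hinj.
move/injectiveP: Hinj => Hinj.
case: (boolP [exists u, exists w, (w \in F [set u]) && (w != g0 u)]).
- case/existsP => u /existsP [w /andP [Hw Hwn]].
  have [g0i Hc1 Hc2] := injF_bij Hinj.
  pose u' := g0i w.
  have Hu'u : u' != u by apply/eqP => Hu; move: Hwn; rewrite -Hu /u' Hc2 eqxx.
  pose g1 x := if x == u then w else g0 x.
  exists g1; split.
  + by move=> x; rewrite /g1; case: eqP => [->|_].
  + apply/injectiveP => Hg1.
    have : g1 u = g1 u' by rewrite /g1 eqxx (negbTE Hu'u) /u' Hc2.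
    by move/Hg1 => Heq; move: Hu'u; rewrite Heq eqxx.
- rewrite negb_exists => /forallP Hall.
  exfalso.
  have Hsub : forall u, F [set u] \subset [set g0 u].
    move=> u; apply/subsetP => w Hw; rewrite inE.
    move: (Hall u); rewrite negb_exists => /forallP /(_ w).
    by rewrite Hw /= negbK.
  have Ord0 : (0 < n)%N by lia.
  pose j := Ordinal Ord0.
  have Hit : forall t, iter t F [set j] \subset [set iter t g0 j].
    elim => //= t IH.
    have : iter t F [set j] \subset [set iter t g0 j] := IH.
    move=> /(HF _ _) H; apply: subset_trans H _; exact: Hsub.
  have := Hp [set j] (set1_neq0 j) => Heq.
  have := Hit r; rewrite Heq => /subset_leq_card.
  by rewrite cardsT card_ord cards1; lia.
Qed.
Lemma noninj_pair (T T' : finType) (f : T -> T') :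
  ~~ injectiveb f -> exists x y, x != y /\ f x = f y.
Proof.
move=> Hni.
case: (pickP (fun p : T * T => (p.1 != p.2) && (f p.1 == f p.2))).
- by case=> x y /andP [H1 /eqP H2]; exists x, y.
- move=> Hnone; exfalso; move/negP: Hni; apply; apply/injectiveP => x y Hxy.
  apply/eqP; apply/negPn/negP => Hne.
  by have := Hnone (x, y); rewrite /= Hne Hxy eqxx.
Qed.

Lemma short_cycle n (g : 'I_n -> 'I_n) (j : 'I_n) :
  ~~ injectiveb g ->
  exists a s, [/\ (0 < s)%N, (s < n)%N, (a + s <= n)%N & iter (a + s) g j = iter a g j].
Proof.
move=> Hg.
pose h : 'I_n.+1 -> 'I_n := fun i => iter i g j.
have Hh : ~~ injectiveb h.
  apply/injectiveP => Hinj; have := leq_card h Hinj; rewrite !card_ord; lia.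
have [x0 [y0 [Hxy Hh']]] := noninj_pair Hh.
have [x [y [Hxy' Hyn Hiter]]] : exists x y : nat,
    [/\ (x < y)%N, (y <= n)%N & iter x g j = iter y g j].
  case: (ltngtP x0 y0) => Hc.
  - by exists x0, y0; split => //; have := ltn_ord y0; lia.
  - by exists y0, x0; split => //; have := ltn_ord x0; lia.
  - by move: Hxy; rewrite (val_inj Hc) eqxx.
pose P b := [exists a : 'I_b, iter a g j == iter b g j].
have HP : exists b, P b.
  by exists y; apply/existsP; exists (Ordinal Hxy'); apply/eqP.
case: (ex_minnP HP) => b0 /existsP [a0 /eqP Ha0] Hmin.
have Hb0y : (b0 <= y)%N.
  by apply: Hmin; apply/existsP; exists (Ordinal Hxy'); apply/eqP.
have Hdist : forall u v : nat, (u < v)%N -> (v < b0)%N -> iter u g j != iter v g j.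
  move=> u v Huv Hvb; apply/negP => /eqP Heq.
  have : P v by apply/existsP; exists (Ordinal Huv); apply/eqP.
  move/Hmin; lia.
have Ha0b0 := ltn_ord a0.
exists a0, (b0 - a0); split; first by lia.
- rewrite ltnNge; apply/negP => Hge.
  have Hb0n : b0 = n by lia.
  have Ha00 : nat_of_ord a0 = 0%N by lia.
  pose k : 'I_n -> 'I_n := fun i => iter i g j.
  have Hk : injective k.
    move=> u v Huv; apply/eqP; apply/negPn/negP => Hne.
    case: (ltngtP u v) => Hc.
    + have := Hdist u v Hc; rewrite Hb0n => /(_ (ltn_ord v)).
      by move: Huv; rewrite /k => ->; rewrite eqxx.
    + have := Hdist v u Hc; rewrite Hb0n => /(_ (ltn_ord u)).
      by move: Huv; rewrite /k => ->; rewrite eqxx.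
    + by move: Hne; rewrite (val_inj Hc) eqxx.
  have [ki Hk1 Hk2] := injF_bij Hk.
  have [u1 [u2 [Hu12 Hgu]]] := noninj_pair Hg.
  have C : forall x y : nat, (x < y)%N -> (y < n)%N ->
      iter x.+1 g j = iter y.+1 g j -> False.
    move=> x1 y1 Hx1 Hy1 He.
    case: (ltngtP y1.+1 n) => Hc.
    + by move: (Hdist x1.+1 y1.+1); rewrite He eqxx Hb0n; lia.
    + lia.
    + have E : y1.+1 = b0 by lia.
      have : iter 0 g j = iter x1.+1 g j by rewrite He E -Ha0 Ha00.
      move=> He2; move: (Hdist 0%N x1.+1); rewrite He2 eqxx Hb0n; lia.
  have E1 : g u1 = iter (ki u1).+1 g j by rewrite iterS -/(k (ki u1)) Hk2.
  have E2 : g u2 = iter (ki u2).+1 g j by rewrite iterS -/(k (ki u2)) Hk2.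
  case: (ltngtP (ki u1) (ki u2)) => Hc.
  + by apply: (C _ _ Hc (ltn_ord _)); rewrite -E1 -E2.
  + by apply: (C _ _ Hc (ltn_ord _)); rewrite -E1 -E2.
  + by move: Hu12; rewrite -(Hk2 u1) -(Hk2 u2) (val_inj Hc) eqxx.
- lia.
- by rewrite subnKC ?Ha0 //; lia.
Qed.

Lemma iter_g_in n (F : {set 'I_n} -> {set 'I_n}) (g : 'I_n -> 'I_n) j t :
  monoF F -> (forall u, g u \in F [set u]) -> iter t g j \in iter t F [set j].
Proof.
move=> HF Hg; elim: t => [|t IH] /=; first by rewrite inE.
have : [set iter t g j] \subset iter t F [set j] by rewrite sub1set.
by move/HF/subsetP; apply; apply: Hg.
Qed.

Lemma grow_full n (F : {set 'I_n} -> {set 'I_n}) r s (v : 'I_n) :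
  monoF F -> primb F r -> (0 < s)%N -> v \in iter s F [set v] ->
  iter (s * n.-1) F [set v] = setT.
Proof.
move=> HF [Hr Hp] Hs Hv.
have HT : F setT = setT.
  by apply: (FsetT (t := r) (S := [set v])) => //; apply: Hp; apply: set1_neq0.
pose H := iter s F.
have HmH : monoF H by move=> S T; apply: iter_mono.
pose X q := iter q H [set v].
have Hinc : forall q, X q \subset X q.+1.
  elim => [|q IH]; first by rewrite /X /= sub1set.
  by rewrite /X /=; apply: HmH.
have HvX : forall q, v \in X q.
  by elim => [|q IH]; [rewrite /X inE | apply: (subsetP (Hinc q))].
have Hfix : forall q, X q.+1 = X q -> X q = setT.
  move=> q Hq.
  have HH : H (X q) = X q by [].
  have Hc : forall c, iter (s * c) F (X q) = X q.
    elim => [|c IH]; first by rewrite muln0.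
    by rewrite mulnS iterD -/(H (iter _ _ _)) IH.
  rewrite -(Hc r); apply: (iter_late HT (Hp _ _)).
  - by apply/set0Pn; exists v.
  - by rewrite leq_pmull.
have Hcard : forall q, X q = setT \/ (q < #|X q|)%N.
  elim => [|q IH]; first by right; rewrite /X /= cards1.
  case: IH => [HX|HX].
  - left; apply/eqP; rewrite eqEsubset subsetT /= -HX; exact: Hinc.
  - case: (X q.+1 =P X q) => Heq; first by left; rewrite Heq; apply: Hfix.
    right; have : X q \proper X q.+1 by rewrite properEneq eq_sym; apply/andP; split; [apply/eqP|].
    move/proper_card; lia.
have -> : iter (s * n.-1) F [set v] = X n.-1.
  by rewrite /X mulnC iterM.
case: (Hcard n.-1) => // Hc.
apply/eqP; rewrite eqEcard subsetT cardsT card_ord /=.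
have := ltn_ord v; move: (#|X n.-1|) Hc => c Hc Hvn; lia.
Qed.

Lemma upper_bool n (F : {set 'I_n} -> {set 'I_n}) r :
  (2 <= n)%N -> monoF F -> F set0 = set0 -> primb F r ->
  primb F ((n - 1) ^ 2 + 1).
Proof.
move=> Hn HF H0 Hpr.
have [g [Hg Hni]] := exists_noninj Hn HF H0 Hpr.
have HT : F setT = setT.
  case: Hpr => Hr Hp.
  by apply: (FsetT (t := r) (S := setT)) => //; apply: Hp; apply: setT_ne0; lia.
split; first by lia.
move=> S /set0Pn [j Hj].
have [a [s [Hs Hsn Has Hcyc]]] := short_cycle j Hni.
pose v := iter a g j.
have Hva : v \in iter a F [set j] by apply: iter_g_in.
have Hvs : v \in iter s F [set v].
  have := iter_g_in v s HF Hg; by rewrite /v -iterD addnC Hcyc.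
have Hfull := grow_full HF Hpr Hs Hvs.
have Hfj : iter (s * n.-1 + a) F [set j] = setT.
  apply/eqP; rewrite eqEsubset subsetT /= iterD -Hfull.
  by apply: iter_mono => //; rewrite sub1set.
have Hle : (s * n.-1 + a <= (n - 1) ^ 2 + 1)%N.
  rewrite expnS expn1; nia.
apply/eqP; rewrite eqEsubset subsetT /=.
rewrite -(iter_late HT Hfj Hle).
by apply: iter_mono => //; rewrite sub1set.
Qed.

Definition Fr n (Rl : 'I_n -> 'I_n -> 'I_n -> bool) (S : {set 'I_n}) : {set 'I_n} :=
  [set i | [exists u, exists w, [&& Rl i u w, u \in S & w \in S]]].

Definition inwin n a L x := (a <= x < a + L) || (x + n < a + L).
Definition win n a L : {set 'I_n} := [set x : 'I_n | inwin n a L x].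
Definition nx n a := if a.+1 == n then 0 else a.+1.
Definition RW n (h u w : 'I_n) :=
  (u == w) && [|| (h == u + 1 :> nat), ((u + 1 == n) && (h == 0 :> nat))
                | ((u + 1 == n) && (h == 1 :> nat))].

Lemma FW_win n a L : (2 <= n) -> (a < n) -> (0 < L) ->
  Fr (@RW n) (win n a L) = win n (nx n a) (if a + L == n then L.+1 else L).
Proof.
move=> Hn Ha HL; apply/setP => x; rewrite !inE /inwin /nx.
have Hx := ltn_ord x.
apply/idP/idP.
- case/existsP => u /existsP [w /and3P [/andP [/eqP Huw Hr] Hu _]].
  move: Hu; rewrite inE /inwin => Hu.
  have Hu' := ltn_ord u.
  case: (a.+1 =P n) => Ha1; case: (a + L =P n) => HaL; lia.
- move=> Hin.
  have Hn1 : n.-1 < n by lia.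
  case: (boolP (x == 0 :> nat)) => Hx0.
    apply/existsP; exists (Ordinal Hn1); apply/existsP; exists (Ordinal Hn1).
    rewrite /RW eqxx /= inE /inwin /=.
    move: Hin; case: (a.+1 =P n) => Ha1; case: (a + L =P n) => HaL; lia.
  have Hxm : x.-1 < n by lia.
  case: (boolP (inwin n a L x.-1)) => Hin1.
    apply/existsP; exists (Ordinal Hxm); apply/existsP; exists (Ordinal Hxm).
    rewrite /RW eqxx /= inE Hin1 andbT; lia.
  apply/existsP; exists (Ordinal Hn1); apply/existsP; exists (Ordinal Hn1).
  rewrite /RW eqxx /= inE /inwin /=.
  move: Hin Hin1; rewrite /inwin; case: (a.+1 =P n) => Ha1; case: (a + L =P n) => HaL; lia.
Qed.

Definition Lw n j a := if n <= j + a then j.+2 else j.+1.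

Lemma win_ge n a L : n <= L -> win n a L = setT.
Proof. move=> HL; apply/setP => x; rewrite !inE /inwin; have := ltn_ord x; lia. Qed.

Lemma win_eqL n a L1 L2 : (L1 = L2 \/ (n <= L1 /\ n <= L2)) -> win n a L1 = win n a L2.
Proof. case=> [->//|[H1 H2]]; by rewrite (win_ge a H1) (win_ge a H2). Qed.

Lemma win1 n (x : 'I_n) : win n x 1 = [set x].
Proof.
apply/setP => y; rewrite !inE /inwin; have := ltn_ord y; have := ltn_ord x.
case: (y =P x) => [->|Hne]; first by rewrite leqnn addn1 ltnSn.
move=> H1 H2; apply/negP => H; apply: Hne; apply: val_inj => /=; lia.
Qed.

Lemma orbitW n (F : {set 'I_n} -> {set 'I_n}) (z : 'I_n) T :
  (2 <= n) -> nat_of_ord z = 0 ->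
  (forall j a, a < n -> j * n + a < T ->
     F (win n a (Lw n j a)) = Fr (@RW n) (win n a (Lw n j a))) ->
  forall j a, a < n -> j * n + a <= T -> iter (j * n + a) F [set z] = win n a (Lw n j a).
Proof.
move=> Hn Hz HF.
suff H : forall t j a, a < n -> t = j * n + a -> t <= T ->
    iter t F [set z] = win n a (Lw n j a).
  by move=> j a Ha HT; apply: (H _ j a).
elim=> [|t IH] j a Ha Ht HtT.
  have Ha0 : a = 0 by lia.
  have Hj0 : j = 0 by case: j Ht => //= j; rewrite mulSn; lia.
  rewrite Ha0 Hj0 /= -win1 Hz /Lw; have -> : (n <= 0 * n + 0) = false by lia.
  by [].
case: a Ha Ht => [|a] Ha Ht.
- case: j Ht => [|j] Ht; first by rewrite mul0n in Ht.
  rewrite mulSn in Ht.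
  have Hn1 : n.-1 < n by lia.
  have Et : t = j * n + n.-1 by lia.
  rewrite iterS (IH j n.-1 Hn1 Et) ?HF ?FW_win //; try lia.
  + rewrite /nx prednK ?eqxx; last lia.
    apply: win_eqL; rewrite /Lw; case: ifP; case: ifP; case: ifP; lia.
  + by rewrite /Lw; case: ifP.
- have Ha' : a < n by lia.
  have Et : t = j * n + a by lia.
  rewrite iterS (IH j a Ha' Et) ?HF ?FW_win //; try lia.
  + rewrite /nx; have -> : (a.+1 == n) = false by apply/eqP; lia.
    apply: win_eqL; left; rewrite /Lw; case: ifP; case: ifP; case: ifP; lia.
  + by rewrite /Lw; case: ifP.
Qed.

Ltac ifs := repeat (match goal with |- context [if ?b then _ else _] =>
  lazymatch b with context [if _ then _ else _] => fail | _ =>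
  let H := fresh "Hif" in case: (boolP b) => H /= end end).

Lemma mono_Fr n (Rl : 'I_n -> 'I_n -> 'I_n -> bool) : monoF (Fr Rl).
Proof.
move=> S T HST; apply/subsetP => i; rewrite !inE.
case/existsP => u /existsP [w /and3P [H1 H2 H3]].
apply/existsP; exists u; apply/existsP; exists w.
by rewrite H1 (subsetP HST _ H2) (subsetP HST _ H3).
Qed.

Definition expo_ok n (F : {set 'I_n} -> {set 'I_n}) k :=
  [/\ (0 < k), (forall j : 'I_n, iter k F [set j] = setT) &
      exists z : 'I_n, iter k.-1 F [set z] != setT].

Lemma win_ne n a L : a < n -> L < n -> win n a L != setT.
Proof.
move=> Ha HL; apply/negP => /eqP /setP.
have Hx : (if a + L < n then a + L else a + L - n) < n by ifs; lia.
move=> /(_ (Ordinal Hx)); rewrite !inE /inwin /=; ifs; lia.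
Qed.

Lemma singles_full n (F : {set 'I_n} -> {set 'I_n}) (z : 'I_n) k :
  monoF F -> (0 < k) -> iter k F [set z] = setT ->
  (forall j : 'I_n, iter j F [set z] = [set j]) ->
  forall j : 'I_n, iter k F [set j] = setT.
Proof.
move=> HF Hk Hkz Hs j.
have HT := FsetT HF Hk Hkz.
by rewrite -Hs -iterD addnC iterD Hkz iterT.
Qed.

Lemma fam_W n : 3 <= n -> expo_ok (Fr (@RW n)) ((n - 1) ^ 2 + 1).
Proof.
move=> Hn.
have Hn0 : 0 < n by lia.
have [z Hz] : exists z : 'I_n, nat_of_ord z = 0 by exists (Ordinal Hn0).
have HN : (n - 1) ^ 2 + 1 = (n - 2) * n + 2.
  rewrite expnS expn1; have -> : n - 1 = (n - 2).+1 by lia.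
  rewrite mulSn mulnS; nia.
rewrite HN.
have Ho := @orbitW n (Fr (@RW n)) z ((n - 2) * n + 2) (ltnW Hn) Hz (fun _ _ _ _ => erefl).
have Hfull : iter ((n - 2) * n + 2) (Fr (@RW n)) [set z] = setT.
  rewrite Ho //; try lia; apply: win_ge; rewrite /Lw; ifs; lia.
split; first by lia.
- apply: (singles_full (mono_Fr _) _ Hfull); first by lia.
  move=> j; have := Ho 0 j (ltn_ord j); rewrite mul0n add0n => ->; last by have := ltn_ord j; nia.
  rewrite /Lw; have -> : (n <= 0 + j) = false by apply/negbTE; have := ltn_ord j; lia.
  exact: win1.
- exists z; have -> : ((n - 2) * n + 2).-1 = (n - 2) * n + 1 by lia.
  rewrite Ho //; try nia.
  apply: win_ne; rewrite /Lw; ifs; lia.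
Qed.

Definition RPa n k (h u w : 'I_n) := (u == w) && ((h == u + 1 :> nat) || (k <= u + 1)).

Lemma FPa_set1 n k (j : 'I_n) :
  Fr (RPa k) [set j] = if k <= j + 1 then setT else [set x : 'I_n | x == j + 1 :> nat].
Proof.
apply/setP => x; rewrite !inE; apply/existsP/idP.
- case=> u /existsP [w /and3P [/andP [/eqP Huw Hr] Hu Hw]].
  move: Hu Hw; rewrite !inE => /eqP Hu /eqP Hw; rewrite Hu in Hr.
  case: ifP => // Hk; rewrite inE; move: Hr; rewrite Hk orbF //.
- move=> H; exists j; apply/existsP; exists j; rewrite !inE eqxx /= andbT /RPa eqxx /=.
  move: H; case: (boolP (k <= j + 1)) => Hk; first by rewrite orbT.
  by rewrite inE => ->.
Qed.

Lemma fam_path n k : 2 <= n -> 0 < k <= n -> expo_ok (Fr (@RPa n k)) k.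
Proof.
move=> Hn Hk.
have HT : Fr (@RPa n k) setT = setT.
  have Hn1 : n.-1 < n by lia.
  apply/eqP; rewrite eqEsubset subsetT /=.
  have := @mono_Fr n (RPa k) [set Ordinal Hn1] setT (subsetT _).
  by rewrite FPa_set1 /=; have -> : k <= n.-1 + 1 by lia.
split; first by lia.
- suff H : forall t (j : 'I_n), k.-1 <= j + t -> iter t.+1 (Fr (@RPa n k)) [set j] = setT.
    by move=> j; have := H k.-1 j; rewrite prednK; [apply; lia | lia].
  elim=> [|t IH] j Hj.
    by rewrite /= FPa_set1; have -> : k <= j + 1 by lia.
  rewrite iterSr FPa_set1; case: ifP => Hkj; first by rewrite iterT.
  have Hj1 : j + 1 < n by lia.
  have -> : [set x : 'I_n | x == j + 1 :> nat] = [set Ordinal Hj1].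
    by apply/setP => x; rewrite !inE.
  by apply: IH => /=; lia.
- have Hn0 : 0 < n by lia.
  exists (Ordinal Hn0).
  suff H : forall t, t <= k.-1 -> exists j : 'I_n, nat_of_ord j = t /\
      iter t (Fr (@RPa n k)) [set Ordinal Hn0] = [set j].
    have [j [_ ->]] := H k.-1 (leqnn _).
    apply/negP => /eqP HH; have := cards1 j; rewrite HH cardsT card_ord; lia.
  elim=> [|t IH] Ht; first by exists (Ordinal Hn0).
  have [j [Hjt Hit]] := IH (ltnW Ht).
  have Hj1 : j + 1 < n by lia.
  exists (Ordinal Hj1); split; first by rewrite /= Hjt addn1.
  rewrite iterS Hit FPa_set1; have -> : (k <= j + 1) = false by apply/negbTE; lia.
  by apply/setP => x; rewrite !inE.
Qed.

Definition RT n u0 w0 (h u w : 'I_n) := RW h u w || ((u == u0 :> nat) && (w == w0 :> nat)).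

Lemma FT1 n u0 w0 (S : {set 'I_n}) :
  (forall u w : 'I_n, u \in S -> w \in S -> nat_of_ord u = u0 -> nat_of_ord w = w0 -> False) ->
  Fr (RT u0 w0) S = Fr (@RW n) S.
Proof.
move=> H; apply/setP => x; rewrite !inE; apply/existsP/existsP => [[u /existsP [w Hw]]|[u /existsP [w Hw]]];
  exists u; apply/existsP; exists w; move: Hw; rewrite /RT.
- case/and3P => /orP [Hr|/andP [/eqP Hu /eqP Hw]] Hus Hws; first by rewrite Hr Hus Hws.
  by exfalso; apply: (H u w).
- by case/and3P => -> -> ->.
Qed.

Lemma FT2 n u0 w0 (S : {set 'I_n}) (u w : 'I_n) :
  u \in S -> w \in S -> nat_of_ord u = u0 -> nat_of_ord w = w0 -> Fr (RT u0 w0) S = setT.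
Proof.
move=> Hu Hw Hu0 Hw0; apply/setP => x; rewrite !inE; apply/existsP; exists u.
by apply/existsP; exists w; rewrite Hu Hw /RT Hu0 Hw0 !eqxx orbT.
Qed.

Lemma fam_trig n k : 3 <= n -> n < k <= 2 * n - 2 ->
  expo_ok (Fr (@RT n (k - n - 1) (k - n))) k.
Proof.
move=> Hn Hk.
have [z Hz] : exists z : 'I_n, nat_of_ord z = 0 by exists (Ordinal (ltnW (ltnW Hn))).
have HF : forall j a, a < n -> j * n + a < k.-1 ->
    Fr (@RT n (k - n - 1) (k - n)) (win n a (Lw n j a)) = Fr (@RW n) (win n a (Lw n j a)).
  move=> j a Ha Hja; apply: FT1 => u w; rewrite !inE /inwin /Lw.
  case: j Hja => [|[|j]] Hja.
  - move=> Hu Hw Hu0 Hw0; move: Hu Hw; rewrite Hu0 Hw0; ifs; lia.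
  - move=> Hu Hw Hu0 Hw0; move: Hu Hw; rewrite Hu0 Hw0; ifs; lia.
  - by exfalso; nia.
have Ho := @orbitW n _ z k.-1 (ltnW Hn) Hz HF.
have Hu : k - n - 1 < n by lia.
have Hw : k - n < n by lia.
have Hkm : iter k.-1 (Fr (@RT n (k - n - 1) (k - n))) [set z] = win n (k - n - 1) 2.
  have -> : k.-1 = 1 * n + (k - n - 1) by lia.
  rewrite Ho //; last by lia.
  by rewrite /Lw; ifs; try lia.
have Hfull' : iter k.-1.+1 (Fr (@RT n (k - n - 1) (k - n))) [set z] = setT.
  rewrite iterS Hkm; apply: (@FT2 _ _ _ _ (Ordinal Hu) (Ordinal Hw)) => //;
    rewrite inE /inwin /=; lia.
have Hfull : iter k (Fr (@RT n (k - n - 1) (k - n))) [set z] = setT.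
  by move: Hfull'; rewrite prednK //; lia.
split; first by lia.
- apply: (singles_full (mono_Fr _) _ Hfull); first by lia.
  move=> j; have := Ho 0 j (ltn_ord j); rewrite mul0n add0n => ->; last by have := ltn_ord j; lia.
  rewrite /Lw; have -> : (n <= 0 + j) = false by apply/negbTE; have := ltn_ord j; lia.
  exact: win1.
- by exists z; rewrite Hkm; apply: win_ne; lia.
Qed.

Definition RP n (qo po : 'I_n) (h u w : 'I_n) := RW h u w || [&& h == qo, u == po & w == qo].

Lemma FP1 n (qo po : 'I_n) (S : {set 'I_n}) :
  (po \in S -> qo \in S -> qo \in Fr (@RW n) S) -> Fr (RP qo po) S = Fr (@RW n) S.
Proof.
move=> H; apply/setP => x; rewrite [in RHS]inE [in LHS]inE.
apply/existsP/existsP => [[u /existsP [w Hw]]|[u /existsP [w Hw]]].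
- move: Hw; rewrite /RP; case/and3P => /orP [Hr|/and3P [/eqP Hx /eqP Hu /eqP Hw']] Hus Hws.
    by exists u; apply/existsP; exists w; rewrite Hr Hus Hws.
  move: (H); rewrite Hx -Hu -Hw' => /(_ Hus Hws); rewrite inE => /existsP [u' /existsP [w' Hw'']].
  by exists u'; apply/existsP; exists w'.
- by exists u; apply/existsP; exists w; move: Hw; rewrite /RP; case/and3P => -> -> ->.
Qed.

Lemma FP2 n (qo po : 'I_n) (S : {set 'I_n}) :
  po \in S -> qo \in S -> Fr (RP qo po) S = qo |: Fr (@RW n) S.
Proof.
move=> Hp Hq; apply/setP => x; rewrite !inE.
apply/existsP/orP.
- case=> u /existsP [w]; rewrite /RP; case/and3P => /orP [Hr|/and3P [/eqP Hx _ _]] Hus Hws.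
  + by right; apply/existsP; exists u; apply/existsP; exists w; rewrite Hr Hus Hws.
  + by left; rewrite Hx.
- case=> [/eqP ->|/existsP [u /existsP [w /and3P [Hr Hus Hws]]]].
  + by exists po; apply/existsP; exists qo; rewrite /RP !eqxx Hp Hq orbT.
  + by exists u; apply/existsP; exists w; rewrite /RP Hr Hus Hws.
Qed.

Lemma addwin n (qo : 'I_n) L :
  qo |: win n (nx n qo) L = win n qo L.+1.
Proof.
apply/setP => x; rewrite !inE /inwin /nx; have := ltn_ord x; have := ltn_ord qo.
case: (boolP (x == qo)) => [/eqP ->|Hne] /=; first by move=> *; ifs; lia.
have Hne' : nat_of_ord x != nat_of_ord qo by [].
move=> *; ifs; lia.
Qed.

Definition Lp n q l0 s := if (q + l0 <= n) && (n < q + l0 + s) then l0 + s + 1 else l0 + s.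

Lemma fam_pin_orbit n J d (qo po z : 'I_n) :
  3 <= n -> 1 <= J -> nat_of_ord z = 0 -> d.+1 = Lw n J qo -> d.+1 < n ->
  nat_of_ord po = (if qo + d < n then qo + d else qo + d - n) ->
  (forall j a, a < n -> j * n + a <= J * n + qo ->
     iter (j * n + a) (Fr (RP qo po)) [set z] = win n a (Lw n j a)) /\
  (forall s, iter (J * n + qo + s) (Fr (RP qo po)) [set z] = win n qo (Lp n qo d.+1 s)).
Proof.
move=> Hn HD Hz Hd Hdn Hp.
have Hn2 : 2 <= n := ltnW Hn.
have HF : forall j a, a < n -> j * n + a < J * n + qo ->
    Fr (RP qo po) (win n a (Lw n j a)) = Fr (@RW n) (win n a (Lw n j a)).
  move=> j a Ha Hja; apply: FP1 => Hpin Hqin.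
  rewrite FW_win //; last by rewrite /Lw; ifs; lia.
  case: (a =P qo) => Haq.
  - exfalso.
    have Hj : j < J.
      by rewrite -(ltn_pmul2r (m := n)); lia.
    move: Hpin Hd; rewrite inE /inwin Hp Haq /Lw; have := ltn_ord qo; ifs; lia.
  - move: Hqin; rewrite !inE /inwin /nx /Lw; have := ltn_ord qo; ifs; lia.
have Ho := @orbitW n _ z (J * n + qo) (ltnW Hn) Hz HF.
split => //.
elim=> [|s IH].
  rewrite addn0 Ho //; try exact: ltn_ord.
  apply: win_eqL; left; rewrite -Hd /Lp; ifs; lia.
rewrite addnS iterS IH FP2; first last.
- by rewrite inE /inwin /Lp; have := ltn_ord qo; ifs; lia.
- by rewrite inE /inwin /Lp Hp; have := ltn_ord qo; ifs; lia.
rewrite FW_win //; last by rewrite /Lp; ifs; lia.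
rewrite addwin; apply: win_eqL; left; rewrite /Lp; have := ltn_ord qo; ifs; lia.
Qed.

Lemma pin_expo n J q d s1 k : 3 <= n -> 1 <= J -> q < n -> d.+1 = Lw n J q -> d.+1 < n ->
  k = J * n + q + s1 -> 0 < s1 -> n <= Lp n q d.+1 s1 -> Lp n q d.+1 s1.-1 < n ->
  exists Rl : 'I_n -> 'I_n -> 'I_n -> bool, expo_ok (Fr Rl) k.
Proof.
move=> Hn HD Hq Hd Hdn Hk Hs1 Hfull Hnot.
have Hp : (if q + d < n then q + d else q + d - n) < n by ifs; lia.
have [z Hz] : exists z : 'I_n, nat_of_ord z = 0 by exists (Ordinal (ltnW (ltnW Hn))).
have [Ho1 Ho2] := @fam_pin_orbit n J d (Ordinal Hq) (Ordinal Hp) z Hn HD Hz Hd Hdn erefl.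
exists (RP (Ordinal Hq) (Ordinal Hp)).
have Hfk : iter k (Fr (RP (Ordinal Hq) (Ordinal Hp))) [set z] = setT.
  by rewrite Hk Ho2 win_ge.
split; first by lia.
- apply: (singles_full (mono_Fr _) _ Hfk); first by lia.
  move=> j; have := Ho1 0 j (ltn_ord j); rewrite mul0n add0n => ->; last first.
    have := ltn_ord j; have : n <= J * n by rewrite leq_pmull.
    move=> /=; lia.
  rewrite /Lw; have -> : (n <= 0 + j) = false by apply/negbTE; have := ltn_ord j; lia.
  exact: win1.
- exists z; have -> : k.-1 = J * n + q + s1.-1 by lia.
  by rewrite Ho2; apply: win_ne.
Qed.


Lemma pin_arith n k : 3 <= n -> 2 * n - 1 <= k -> k <= (n - 1) ^ 2 ->
  exists J q d s1, (1 <= J) /\ (q < n) /\ (d.+1 = Lw n J q) /\ (d.+1 < n) /\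
    (k = J * n + q + s1) /\ (0 < s1) /\ (n <= Lp n q d.+1 s1) /\ (Lp n q d.+1 s1.-1 < n).
Proof.
case: n => [|m] //; rewrite subn1 /= => Hm Hk1 Hk2.
have Hm0 : 0 < m by lia.
have Hkd := divn_eq k m.
have Hr := ltn_pmod k Hm0.
move: (k %/ m) (k %% m) Hkd Hr => D r Hkd Hr.
rewrite expnS expn1 in Hk2.
have HD2 : 2 <= D by nia.
have HDn : D <= m by nia.
have HDr : D = m -> r = 0 by nia.
case: D HD2 HDn HDr Hkd => [|J] // HJ HJm HJr Hkd.
have E1 : J.+1 * m = J * m + m by rewrite mulSn addnC.
have E2 : J * m.+1 = J * m + J by rewrite mulnS addnC.
rewrite E1 in Hkd.
move: (J * m) E2 Hkd => A E2 Hkd.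
case: (posnP r) => Hr0.
- exists J, 0, J, (m - J); rewrite /Lw /Lp E2; repeat split; ifs; lia.
- have Hq : r.+1 < m.+1 by lia.
  exists J, r.+1, (Lw m.+1 J r.+1).-1, (m - J - 1); rewrite /Lw /Lp E2; repeat split; ifs; lia.
Qed.

Lemma fam_all n k : 2 <= n -> 0 < k <= (n - 1) ^ 2 + 1 ->
  exists Rl : 'I_n -> 'I_n -> 'I_n -> bool, expo_ok (Fr Rl) k.
Proof.
move=> Hn Hk.
case: (leqP k n) => Hkn; first by exists (@RPa n k); apply: fam_path; lia.
case: (leqP k (2 * n - 2)) => Hk2.
  by exists (@RT n (k - n - 1) (k - n)); apply: fam_trig; lia.
have Hn3 : 3 <= n.
  case: n Hn Hk Hkn Hk2 => [|[|[|n]]] //= _; rewrite ?subn1 /=; lia.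
case: (leqP k ((n - 1) ^ 2)) => Hk3.
  have [J [q [d [s1 [H1 [H2 [H3 [H4 [H5 [H6 [H7 H8]]]]]]]]]]] := @pin_arith n k Hn3 (ltac:(lia)) Hk3.
  exact: (pin_expo Hn3 H1 H2 H3 H4 H5 H6 H7 H8).
have -> : k = (n - 1) ^ 2 + 1 by lia.
by exists (@RW n); apply: fam_W.
Qed.

Local Open Scope ring_scope.

Definition FA (R : realType) m n (A : tensor R m n) (S : {set 'I_n}) : {set 'I_n} :=
  [set i | [exists f : {ffun 'I_m -> 'I_n},
     [&& [forall k : 'I_m, (val k == 0%N) ==> (f k == i)], A f != 0 &
         [forall k : 'I_m, (val k != 0%N) ==> (f k \in S)]]]].

Definition supp (R : realType) n (x : 'I_n -> R) : {set 'I_n} := [set i | x i != 0].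

Lemma tapp_ge0 (R : realType) m n (A : tensor R m n) (x : 'I_n -> R) i :
  nonneg_tensor A -> (forall j, 0 <= x j) -> 0 <= tapp A x i.
Proof.
move=> HA Hx; rewrite /tapp; apply: sumr_ge0 => f _.
by apply: mulr_ge0 => //; apply: prodr_ge0.
Qed.

Lemma tapp_neq0 (R : realType) m n (A : tensor R m n) (x : 'I_n -> R) i :
  nonneg_tensor A -> (forall j, 0 <= x j) ->
  (tapp A x i != 0) = (i \in FA A (supp x)).
Proof.
move=> HA Hx; rewrite /tapp inE.
rewrite psumr_neq0; last first.
  by move=> f _; apply: mulr_ge0 => //; apply: prodr_ge0.
apply/hasP/existsP.
- case=> f _ /andP [Hf Hpos]; exists f.
  have : A f * \prod_(k : 'I_m | val k != 0%N) x (f k) != 0 by rewrite gt_eqF.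
  rewrite mulf_eq0 negb_or => /andP [HAf /prodf_neq0 Hp].
  rewrite Hf HAf /=; apply/forallP => k; apply/implyP => Hk.
  by rewrite inE; apply: Hp.
- case=> f /and3P [Hf HAf /forallP Hs]; exists f; first by rewrite mem_index_enum.
  rewrite Hf /= lt0r; apply/andP; split; last first.
    by apply: mulr_ge0 => //; apply: prodr_ge0.
  rewrite mulf_eq0 negb_or HAf /=; apply/prodf_neq0 => k Hk.
  by move/implyP: (Hs k) => /(_ Hk); rewrite inE.
Qed.

Lemma expo_gt0 (R : realType) m : (2 <= m)%N -> 0 < ((m.-1)%:R : R)^-1.
Proof. move=> Hm; rewrite invr_gt0 ltr0n; lia. Qed.

Lemma TA_ge0 (R : realType) m n (A : tensor R m n) (x : 'I_n -> R) i :
  0 <= TA A x i.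
Proof. exact: powR_ge0. Qed.

Lemma supp_TA (R : realType) m n (A : tensor R m n) (x : 'I_n -> R) :
  (2 <= m)%N -> nonneg_tensor A -> (forall j, 0 <= x j) ->
  supp (TA A x) = FA A (supp x).
Proof.
move=> Hm HA Hx; apply/setP => i; rewrite [in LHS]inE -(tapp_neq0 i HA Hx).
rewrite /TA; apply/idP/idP => H.
- have H0 : 0 < powR (tapp A x i) (m.-1%:R)^-1 by rewrite lt0r H powR_ge0.
  have := gt0_powR (expo_gt0 R Hm) (tapp_ge0 i HA Hx) H0.
  by rewrite lt0r => /andP [].
- apply: lt0r_neq0; apply: powR_gt0.
  by rewrite lt0r H tapp_ge0.
Qed.

Lemma supp_iter (R : realType) m n (A : tensor R m n) (x : 'I_n -> R) r :
  (2 <= m)%N -> nonneg_tensor A -> (forall j, 0 <= x j) ->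
  supp (iter r (TA A) x) = iter r (FA A) (supp x).
Proof.
move=> Hm HA Hx; elim: r => [//|r IH] /=.
rewrite supp_TA // ?IH //.
case: r {IH} => [|r] j //=; exact: TA_ge0.
Qed.

Lemma prim_exp_bool (R : realType) m n (A : tensor R m n) r :
  (2 <= m)%N -> nonneg_tensor A -> prim_exponent A r <-> primb (FA A) r.
Proof.
move=> Hm HA; split.
- case=> Hr H; split => // S HS.
  pose x : 'I_n -> R := fun i => if i \in S then 1 else 0.
  have Hx : forall j, 0 <= x j by move=> j; rewrite /x; case: ifP.
  have Hsx : supp x = S.
    by apply/setP => i; rewrite inE /x; case: ifP => _; rewrite ?oner_neq0 ?eqxx.
  have Hnn : nonneg_nonzero_vec x.
    split => //; case/set0Pn: HS => j Hj; exists j; by rewrite /x Hj oner_neq0.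
  rewrite -Hsx -supp_iter //; apply/setP => i; rewrite !inE.
  by apply: lt0r_neq0; apply: H.
- case=> Hr H; split => // x [Hx [j Hj]] i.
  have HS : supp x != set0 by apply/set0Pn; exists j; rewrite inE.
  have := H _ HS; rewrite -supp_iter // => /setP /(_ i); rewrite !inE => Hi.
  rewrite lt0r Hi /=; move: Hi; case: r {Hr H} => [|r] /= _; [exact: Hx | exact: TA_ge0].
Qed.


Definition pat m n (h u w : 'I_n) : {ffun 'I_m -> 'I_n} :=
  [ffun k : 'I_m => if val k == 0%N then h else if val k == 1%N then u else w].

Definition tensorOf (R : realType) m n (Rl : 'I_n -> 'I_n -> 'I_n -> bool) : tensor R m n :=
  [ffun f => if [exists h, exists u, exists w, Rl h u w && (f == pat m h u w)] then 1 else 0].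

Lemma FA_tensorOf (R : realType) m n (Rl : 'I_n -> 'I_n -> 'I_n -> bool) (S : {set 'I_n}) :
  (3 <= m)%N -> FA (tensorOf R m Rl) S = Fr Rl S.
Proof.
move=> Hm; apply/setP => i; rewrite /FA /Fr !inE.
have H0 : (0 < m)%N by lia.
have H1 : (1 < m)%N by lia.
have H2 : (2 < m)%N by lia.
apply/existsP/existsP.
- case=> f /and3P [/forallP Hf HA /forallP HS].
  move: HA; rewrite ffunE; case: ifP => [/existsP [h /existsP [u /existsP [w /andP [Hr /eqP Hfp]]]] _|]; last by rewrite eqxx.
  have Hh : h = i.
    by move: (Hf (Ordinal H0)); rewrite Hfp ffunE /= => /eqP.
  have Hu : u \in S.
    by move: (HS (Ordinal H1)); rewrite Hfp ffunE /=.
  have Hw : w \in S.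
    by move: (HS (Ordinal H2)); rewrite Hfp ffunE /=.
  by exists u; apply/existsP; exists w; rewrite -Hh Hr Hu Hw.
- case=> u /existsP [w /and3P [Hr Hu Hw]].
  exists (pat m i u w); apply/and3P; split.
  + by apply/forallP => k; apply/implyP => Hk; rewrite ffunE Hk.
  + rewrite ffunE; case: ifP => [_|/negbT/negP Hn]; first by rewrite oner_neq0.
    by exfalso; apply: Hn; apply/existsP; exists i; apply/existsP; exists u; apply/existsP; exists w; rewrite Hr eqxx.
  + apply/forallP => k; apply/implyP => Hk; rewrite ffunE (negbTE Hk).
    by case: ifP.
Qed.

Lemma FA_mono (R : realType) m n (A : tensor R m n) : monoF (FA A).
Proof.
move=> S T HST; apply/subsetP => i; rewrite /FA !inE.
case/existsP => f /and3P [H1 H2 /forallP H3]; apply/existsP; exists f.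
rewrite H1 H2 /=; apply/forallP => k; apply/implyP => Hk.
by apply: (subsetP HST); move/implyP: (H3 k); apply.
Qed.

Lemma FA_set0 (R : realType) m n (A : tensor R m n) : (2 <= m)%N -> FA A set0 = set0.
Proof.
move=> Hm; apply/setP => i; rewrite /FA !inE; apply/negbTE/negP => /existsP [f /and3P [_ _ /forallP H]].
have H1 : (1 < m)%N by lia.
by move/implyP: (H (Ordinal H1)); rewrite inE => /(_ isT).
Qed.

Lemma deg_of_expo (R : realType) m n (Rl : 'I_n -> 'I_n -> 'I_n -> bool) k :
  (3 <= m)%N -> expo_ok (Fr Rl) k ->
  exists A : tensor R m n, primitive A /\ primitive_degree A k.
Proof.
move=> Hm [Hk Hall [z Hz]].
pose A := tensorOf R m Rl.
have HA : nonneg_tensor A by move=> f; rewrite /A ffunE; case: ifP.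
have Hm2 : (2 <= m)%N by lia.
have HE : forall t S, iter t (FA A) S = iter t (Fr Rl) S.
  move=> t S; elim: t => //= t ->; exact: FA_tensorOf.
have Hpk : primb (FA A) k.
  split => // S /set0Pn [j Hj]; rewrite HE.
  apply/eqP; rewrite eqEsubset subsetT /= -(Hall j).
  by apply: iter_mono; [exact: mono_Fr | rewrite sub1set].
exists A; split.
- split => //; exists k; exact/(prim_exp_bool k Hm2 HA).
- split; first exact/(prim_exp_bool k Hm2 HA).
  move=> r Hr /(prim_exp_bool r Hm2 HA) [Hr0 Hp].
  have HT : Fr Rl setT = setT by apply: (FsetT (mono_Fr Rl) Hk (Hall z)).
  have := Hp [set z] (set1_neq0 z); rewrite HE => Hrz.
  move/negP: Hz; apply; apply/eqP; apply: (iter_late HT Hrz); lia.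
Qed.

Theorem theorem3p4 (R : realType) (m n : nat) :
  (3 <= m)%N -> (2 <= n)%N ->
  forall k : nat,
    (exists A : tensor R m n, primitive A /\ primitive_degree A k) <->
    (1 <= k <= (n - 1) ^ 2 + 1)%N.
Proof.
move=> Hm Hn k; split.
- case=> A [[HA [r Hr]] [Hk Hmin]].
  have Hm2 : (2 <= m)%N by lia.
  have Hpr := proj1 (prim_exp_bool r Hm2 HA) Hr.
  have HN := upper_bool Hn (@FA_mono R m n A) (FA_set0 A Hm2) Hpr.
  have Hk0 : (0 < k)%N by case: Hk.
  apply/andP; split => //.
  rewrite leqNgt; apply/negP => Hlt.
  by apply: (Hmin _ Hlt); apply/(prim_exp_bool _ Hm2 HA).
- move=> Hk; case: (fam_all Hn Hk) => Rl HRl.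
  exact: (@deg_of_expo R m n Rl k Hm HRl).
Qed.
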